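(* Let $k \geq 1$ and let $\{b_j, b_j^\perp\}$, $j = 0,1,\ldots,2k+1$, be orthonormal bases of $\mathbb{C}^2$ (so $\langle b_j, b_j^\perp\rangle = 0$) such that for all $i \neq j$ the quantities $|\langle b_i,b_j\rangle|$, $|\langle b_i,b_j^\perp\rangle|$, $|\langle b_i^\perp,b_j\rangle|$, $|\langle b_i^\perp,b_j^\perp\rangle|$ all lie outside $\{0,1\}$. For $0 \leq j \leq k$ define vectors in $\mathbb{C}^2\otimes\mathbb{C}^2$: $$v_{2j} := b_j \otimes b_{2j}^\perp,\quad v_{2j+1} := b_j^\perp \otimes b_{(2j+2) \bmod (2k+2)},\quad w_{2j} := b_j^\perp \otimes b_{2j+1}^\perp,\quad w_{2j+1} := b_j \otimes b_{(2j+3) \bmod (2k+2)}.$$ Then: (a) the orthogonality graph of $\{v_0,\ldots,v_{2k+1},w_0,\ldots,w_{2k+1}\}$ is the prism graph $Y_{4k+4}$, i.e. $v_i$ and $v_j$ (respectively $w_i$ and $w_j$) are orthogonal iff $j - i \equiv \pm 1 \pmod{2k+2}$, and $v_i$ and $w_j$ are orthogonal iff $i = j$; (b) every nonzero product vector $x \otimes y \in \mathbb{C}^2\otimes\mathbb{C}^2$ is orthogonal to at most $3$ of the $4k+4$ vectors $v_0,\ldots,v_{2k+1},w_0,\ldots,w_{2k+1}$.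
   Context: The orthogonality graph of a finite list of vectors is the simple graph whose vertices are the vectors and in which two distinct vertices are adjacent iff the corresponding vectors are orthogonal. For product vectors, $x_1\otimes x_2$ and $y_1\otimes y_2$ are orthogonal iff $\langle x_1,y_1\rangle = 0$ or $\langle x_2,y_2\rangle = 0$. *)

(* Defs.v *)
(* C^2 is modelled as 'cV[C]_2 over an arbitrary
   numClosedFieldType C (e.g. the complex numbers); C^2 (x) C^2 is
   modelled as 2x2 matrices, with x (x) y := the outer product. *)
From HB Require Import structures.
From mathcomp Require Import all_boot all_order all_algebra.
Set Implicit Arguments. Unset Strict Implicit. Unset Printing Implicit Defensive.
Import Order.TTheory GRing.Theory Num.Theory.
Local Open Scope ring_scope.

Definition dot2 {C : numClosedFieldType} (x y : 'cV[C]_2) : C :=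
  \sum_(i < 2) (x i 0)^* * y i 0.

Definition tens {C : numClosedFieldType} (x y : 'cV[C]_2) : 'M[C]_2 :=
  \matrix_(i, j) (x i 0 * y j 0).

Definition dotT {C : numClosedFieldType} (A B : 'M[C]_2) : C :=
  \sum_(i < 2) \sum_(j < 2) (A i j)^* * B i j.

Definition orthT {C : numClosedFieldType} (A B : 'M[C]_2) : bool :=
  dotT A B == 0.

(* The vectors v_n, w_n (0 <= n <= 2k+1), given the bases {b_j, bp_j}.
   n = 2j   : v = b_j (x) bp_{2j},        w = bp_j (x) bp_{2j+1}
   n = 2j+1 : v = bp_j (x) b_{(2j+2) mod (2k+2)}, w = b_j (x) b_{(2j+3) mod (2k+2)} *)
Definition vvec {C : numClosedFieldType} (k : nat) (b bp : nat -> 'cV[C]_2)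
  (n : nat) : 'M[C]_2 :=
  if odd n then tens (bp n./2) (b ((n.+1) %% (2 * k + 2))%N)
  else tens (b n./2) (bp n).

Definition wvec {C : numClosedFieldType} (k : nat) (b bp : nat -> 'cV[C]_2)
  (n : nat) : 'M[C]_2 :=
  if odd n then tens (b n./2) (b ((n.+2) %% (2 * k + 2))%N)
  else tens (bp n./2) (bp n.+1).

(* Main.v *)
Require Import Defs.
From HB Require Import structures.
From mathcomp Require Import all_boot all_order all_algebra.
From mathcomp Require Import zify ring lra.
Set Implicit Arguments. Unset Strict Implicit. Unset Printing Implicit Defensive.
Import Order.TTheory GRing.Theory Num.Theory.
Local Open Scope ring_scope.



Lemma sum2 (C : numClosedFieldType) (F : 'I_2 -> C) : \sum_(i < 2) F i = F 0 + F 1.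
Proof. rewrite !big_ord_recl big_ord0 addr0; congr (_ + F _); exact: val_inj. Qed.

Lemma dotT_tens (C : numClosedFieldType) (x y u w : 'cV[C]_2) :
  dotT (tens x y) (tens u w) = dot2 x u * dot2 y w.
Proof.
rewrite /dotT /dot2 !sum2 !mxE.
rewrite !rmorphM /=; ring.
Qed.

Lemma orthT_tens (C : numClosedFieldType) (x y u w : 'cV[C]_2) :
  orthT (tens x y) (tens u w) = (dot2 x u == 0) || (dot2 y w == 0).
Proof. by rewrite /orthT dotT_tens mulf_eq0. Qed.

Lemma dot2C (C : numClosedFieldType) (x y : 'cV[C]_2) : dot2 y x = (dot2 x y)^*.
Proof.
rewrite /dot2 !sum2.
rewrite rmorphD !rmorphM /= !conjCK; ring.
Qed.

Lemma lagrange (C : numClosedFieldType) (x u u' : 'cV[C]_2) :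
  (x 0 0 != 0) || (x 1 0 != 0) -> dot2 x u = 0 -> dot2 x u' = 0 ->
  `|dot2 u u'| ^+ 2 = dot2 u u * dot2 u' u'.
Proof.
rewrite /dot2 !sum2 => hx h1 h2.
set a := u 0 0 in h1 h2 *; set c := u 1 0 in h1 h2 *.
set a' := u' 0 0 in h1 h2 *; set c' := u' 1 0 in h1 h2 *.
set x0 := x 0 0 in hx h1 h2 *; set x1 := x 1 0 in hx h1 h2 *.
have hd : a * c' - c * a' = 0.
  have e0 : (a * c' - c * a') * x0^* = 0.
    have -> : (a * c' - c * a') * x0^* = c' * (x0^* * a + x1^* * c)
       - c * (x0^* * a' + x1^* * c') by ring.
    by rewrite h1 h2; ring.
  have e1 : (a * c' - c * a') * x1^* = 0.
    have -> : (a * c' - c * a') * x1^* = - a' * (x0^* * a + x1^* * c)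
       + a * (x0^* * a' + x1^* * c') by ring.
    by rewrite h1 h2; ring.
  case/orP: hx => hx.
    by move/eqP: e0; rewrite mulf_eq0 conjC_eq0 (negPf hx) orbF => /eqP.
  by move/eqP: e1; rewrite mulf_eq0 conjC_eq0 (negPf hx) orbF => /eqP.
rewrite normCK rmorphD !rmorphM /= !conjCK.
have hd' : (a * c' - c * a')^* = 0 by rewrite hd conjC0.
rewrite rmorphB !rmorphM /= in hd'.
have E : (a^* * a' + c^* * c') * (a * a'^* + c * c'^*) =
  (a^* * a + c^* * c) * (a'^* * a' + c'^* * c') - (a * c' - c * a') * (a^* * c'^* - c^* * a'^*) by ring.
by rewrite E hd mul0r subr0.
Qed.


Local Close Scope ring_scope.


Lemma modlt2 (x M : nat) : x < M + M -> x %% M = if x < M then x else x - M.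
Proof.
move=> h; case: ifP => hx; first by rewrite modn_small.
have -> : x = (x - M) + M by lia.
by rewrite modnDr modn_small; lia.
Qed.

Lemma split_nat n : exists p a, n = (p : bool) + a.*2.
Proof. by exists (odd n), n./2; rewrite odd_double_half. Qed.

Ltac natsolve i j :=
  let p := fresh "p" in let a := fresh "a" in let q := fresh "q" in let c := fresh "c" in
  let e1 := fresh "e" in let e2 := fresh "e" in
  have [p [a e1]] := split_nat i; have [q [c e2]] := split_nat j; subst i j;
  rewrite ?oddD ?odd_double ?half_bit_double ?modlt2; try lia;
  rewrite -?addnn;
  destruct p, q; simpl in *; (repeat case: ifP => ?); lia.

Lemma combV k i j : 1 <= k -> i < 2*k+2 -> j < 2*k+2 -> i <> j ->
  ((i./2 == j./2) && (~~odd i != ~~odd j)) ||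
  (((if odd i then i.+1 %% (2*k+2) else i) == (if odd j then j.+1 %% (2*k+2) else j))
    && (odd i != odd j))
  <-> (j = i.+1 %[mod 2*k+2] \/ i = j.+1 %[mod 2*k+2]).
Proof. move=> hk hi hj hij; natsolve i j. Qed.

Lemma combW k i j : 1 <= k -> i < 2*k+2 -> j < 2*k+2 -> i <> j ->
  ((i./2 == j./2) && (odd i != odd j)) ||
  (((if odd i then i.+2 %% (2*k+2) else i.+1) == (if odd j then j.+2 %% (2*k+2) else j.+1))
    && (odd i != odd j))
  <-> (j = i.+1 %[mod 2*k+2] \/ i = j.+1 %[mod 2*k+2]).
Proof. move=> hk hi hj hij; natsolve i j. Qed.

Lemma combVW k i j : 1 <= k -> i < 2*k+2 -> j < 2*k+2 ->
  ((i./2 == j./2) && (~~ odd i != odd j)) ||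
  (((if odd i then i.+1 %% (2*k+2) else i) == (if odd j then j.+2 %% (2*k+2) else j.+1))
    && (odd i != odd j))
  <-> i = j.
Proof. move=> hk hi hj; natsolve i j. Qed.

Lemma injV1 k i j : i < 2*k+2 -> j < 2*k+2 -> i != j ->
  (i./2 != j./2) || (~~ odd i != ~~ odd j).
Proof. move=> hi hj hij; natsolve i j. Qed.

Lemma injW1 k i j : i < 2*k+2 -> j < 2*k+2 -> i != j ->
  (i./2 != j./2) || (odd i != odd j).
Proof. move=> hi hj hij; natsolve i j. Qed.

Lemma injV2 k i j : 1 <= k -> i < 2*k+2 -> j < 2*k+2 -> i != j ->
  ((if odd i then i.+1 %% (2*k+2) else i) != (if odd j then j.+1 %% (2*k+2) else j))
  || (odd i != odd j).
Proof. move=> hk hi hj hij; natsolve i j. Qed.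

Lemma injW2 k i j : 1 <= k -> i < 2*k+2 -> j < 2*k+2 -> i != j ->
  ((if odd i then i.+2 %% (2*k+2) else i.+1) != (if odd j then j.+2 %% (2*k+2) else j.+1))
  || (odd i != odd j).
Proof. move=> hk hi hj hij; natsolve i j. Qed.

Lemma injVW2 k i j : 1 <= k -> i < 2*k+2 -> j < 2*k+2 ->
  ((if odd i then i.+1 %% (2*k+2) else i) != (if odd j then j.+2 %% (2*k+2) else j.+1))
  || (odd i != odd j).
Proof. move=> hk hi hj; natsolve i j. Qed.

Lemma bnd k i : 1 <= k -> i < 2*k+2 -> [/\ i./2 < 2*k+2,
  (if odd i then i.+1 %% (2*k+2) else i) < 2*k+2 &
  (if odd i then i.+2 %% (2*k+2) else i.+1) < 2*k+2].
Proof.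
move=> hk hi; split; first by rewrite ltn_half_double; lia.
  by case: ifP => // _; rewrite ltn_pmod; lia.
case: ifP => ho; first by rewrite ltn_pmod; lia.
have [p [a e]] := split_nat i; subst i; move: ho; rewrite oddD odd_double -addnn.
by destruct p => //= _; lia.
Qed.

Local Open Scope ring_scope.

Definition lab {C : numClosedFieldType} (b bp : nat -> 'cV[C]_2) (t : bool) (m : nat) :=
  if t then b m else bp m.

Lemma vvec_lab (C : numClosedFieldType) k (b bp : nat -> 'cV[C]_2) n :
  vvec k b bp n = tens (lab b bp (~~ odd n) n./2)
    (lab b bp (odd n) (if odd n then n.+1 %% (2*k+2) else n)%N).
Proof. by rewrite /vvec /lab; case: (odd n). Qed.

Lemma wvec_lab (C : numClosedFieldType) k (b bp : nat -> 'cV[C]_2) n :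
  wvec k b bp n = tens (lab b bp (odd n) n./2)
    (lab b bp (odd n) (if odd n then n.+2 %% (2*k+2) else n.+1)%N).
Proof. by rewrite /wvec /lab; case: (odd n). Qed.

Lemma card_le1_inj M (P : 'I_M -> bool) :
  (forall i j : 'I_M, (nat_of_ord i != nat_of_ord j) -> P i -> ~~ P j) ->
  (#|[set i : 'I_M | P i]| <= 1)%N.
Proof.
move=> Q; rewrite leqNgt; apply/negP => /card_gt1P [i [j [hi hj hij]]].
rewrite !inE in hi hj.
by move: (Q i j hij hi); rewrite hj.
Qed.

Lemma nonzero_of_tens (C : numClosedFieldType) (x y : 'cV[C]_2) :
  tens x y != 0 -> ((x 0 0 != 0) || (x 1 0 != 0)) && ((y 0 0 != 0) || (y 1 0 != 0)).
Proof.
move=> h.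
have E : forall z : 'cV[C]_2, z 0 0 = 0 -> z 1 0 = 0 -> forall i, z i 0 = 0.
  move=> z h0 h1 [[|[|//]] hi].
    by rewrite (_ : Ordinal hi = 0) //; apply: val_inj.
  by rewrite (_ : Ordinal hi = 1) //; apply: val_inj.
apply/andP; split; rewrite -negb_and; apply/negP => /andP [/eqP a /eqP c];
  apply: (negP h); apply/eqP/matrixP => i j; rewrite !mxE.
  by rewrite (E x a c) mul0r.
by rewrite (E y a c) mulr0.
Qed.

Theorem mainTheorem8 (C : numClosedFieldType) (k : nat) (b bp : nat -> 'cV[C]_2)
  (hk : (1 <= k)%N)
  (hnorm : forall j, (j < 2 * k + 2)%N -> dot2 (b j) (b j) = 1)
  (hnormp : forall j, (j < 2 * k + 2)%N -> dot2 (bp j) (bp j) = 1)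
  (horth : forall j, (j < 2 * k + 2)%N -> dot2 (b j) (bp j) = 0)
  (hgen : forall i j, (i < 2 * k + 2)%N -> (j < 2 * k + 2)%N -> i <> j ->
     [/\ `|dot2 (b i) (b j)| \notin [:: 0; 1],
         `|dot2 (b i) (bp j)| \notin [:: 0; 1],
         `|dot2 (bp i) (b j)| \notin [:: 0; 1] &
         `|dot2 (bp i) (bp j)| \notin [:: 0; 1]]) :
  (* (a) the orthogonality graph is the prism graph Y_{4k+4} *)
  ((forall i j, (i < 2 * k + 2)%N -> (j < 2 * k + 2)%N -> i <> j ->
      (orthT (vvec k b bp i) (vvec k b bp j) <->
         (j = i.+1 %[mod 2 * k + 2] \/ i = j.+1 %[mod 2 * k + 2])) /\
      (orthT (wvec k b bp i) (wvec k b bp j) <->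
         (j = i.+1 %[mod 2 * k + 2] \/ i = j.+1 %[mod 2 * k + 2]))) /\
   (forall i j, (i < 2 * k + 2)%N -> (j < 2 * k + 2)%N ->
      (orthT (vvec k b bp i) (wvec k b bp j) <-> i = j)))
  /\
  (* (b) a nonzero product vector is orthogonal to at most 3 of them *)
  (forall x y : 'cV[C]_2, tens x y != 0 ->
     (#|[set i : 'I_(2 * k + 2) | orthT (tens x y) (vvec k b bp i)]|
      + #|[set i : 'I_(2 * k + 2) | orthT (tens x y) (wvec k b bp i)]| <= 3)%N).
Proof.
set M := (2 * k + 2)%N.
have H1 : forall t m, (m < M)%N -> dot2 (lab b bp t m) (lab b bp t m) = 1.
  by move=> [] m hm; rewrite /lab; [apply: hnorm | apply: hnormp].
have H0 : forall t t' m, (m < M)%N -> t != t' -> dot2 (lab b bp t m) (lab b bp t' m) = 0.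
  move=> [] [] m hm //= _; rewrite /lab ?horth //.
  by rewrite dot2C horth // conjC0.
have H3 : forall t t' m m', (m < M)%N -> (m' < M)%N -> (m != m') || (t != t') ->
    `|dot2 (lab b bp t m) (lab b bp t' m')| != 1.
  move=> t t' m m' hm hm'; case: (eqVneq m m') => [<-|hne] /= htt.
    by rewrite H0 // normr0 eq_sym oner_eq0.
  have [g1 g2 g3 g4] := hgen m m' hm hm' (elimN eqP hne).
  by case: t; case: t'; rewrite /lab; [move: g1|move: g2|move: g3|move: g4];
    rewrite !inE negb_or => /andP [].
have H2 : forall t t' m m', (m < M)%N -> (m' < M)%N ->
    (dot2 (lab b bp t m) (lab b bp t' m') == 0) = ((m == m') && (t != t')).
  move=> t t' m m' hm hm'; case: (eqVneq m m') => [<-|hne] /=.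
    case: (eqVneq t t') => [<-|htt] /=.
      by rewrite H1 // oner_eq0.
    by rewrite H0 // eqxx.
  have [g1 g2 g3 g4] := hgen m m' hm hm' (elimN eqP hne).
  apply/negbTE; rewrite -normr_eq0.
  by case: t; case: t'; rewrite /lab; [move: g1|move: g2|move: g3|move: g4];
    rewrite !inE negb_or => /andP [].
have hinc : forall x : 'cV[C]_2, (x 0 0 != 0) || (x 1 0 != 0) ->
    forall t t' m m', (m < M)%N -> (m' < M)%N -> (m != m') || (t != t') ->
    dot2 x (lab b bp t m) == 0 -> dot2 x (lab b bp t' m') != 0.
  move=> x hx t t' m m' hm hm' hd /eqP h1; apply/negP => /eqP h2.
  have := lagrange hx h1 h2; rewrite !H1 // mulr1 => /eqP; rewrite sqrf_eq1.
  case/orP => [/eqP e|/eqP e].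
    by move: (H3 t t' m m' hm hm' hd); rewrite e eqxx.
  by have := normr_ge0 (dot2 (lab b bp t m) (lab b bp t' m')); rewrite e oppr_ge0 ler10.
split.
  split.
    move=> i j hi hj hij.
    have [a1 a2 a3] := bnd hk hi; have [c1 c2 c3] := bnd hk hj.
    split.
      rewrite !vvec_lab orthT_tens !H2 //; exact: combV.
    rewrite !wvec_lab orthT_tens !H2 //; exact: combW.
  move=> i j hi hj.
  have [a1 a2 a3] := bnd hk hi; have [c1 c2 c3] := bnd hk hj.
  rewrite vvec_lab wvec_lab orthT_tens !H2 //; exact: combVW.
move=> x y hxy.
have /andP [hx hy] := nonzero_of_tens hxy.
set Av := [set i : 'I_M | dot2 x (lab b bp (~~ odd i) i./2) == 0].
set Bv := [set i : 'I_M | dot2 y (lab b bp (odd i) (if odd i then i.+1 %% M else i)%N) == 0].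
set Aw := [set i : 'I_M | dot2 x (lab b bp (odd i) i./2) == 0].
set Bw := [set i : 'I_M | dot2 y (lab b bp (odd i) (if odd i then i.+2 %% M else i.+1)%N) == 0].
have -> : [set i : 'I_M | orthT (tens x y) (vvec k b bp i)] = Av :|: Bv.
  by apply/setP => i; rewrite !inE vvec_lab orthT_tens.
have -> : [set i : 'I_M | orthT (tens x y) (wvec k b bp i)] = Aw :|: Bw.
  by apply/setP => i; rewrite !inE wvec_lab orthT_tens.
have cAv : (#|Av| <= 1)%N.
  apply: card_le1_inj => i j hij; have [a1 _ _] := bnd hk (ltn_ord i);
  have [c1 _ _] := bnd hk (ltn_ord j).
  by apply: (hinc x hx _ _ _ _ a1 c1); exact: (injV1 (ltn_ord i) (ltn_ord j) hij).
have cAw : (#|Aw| <= 1)%N.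
  apply: card_le1_inj => i j hij; have [a1 _ _] := bnd hk (ltn_ord i);
  have [c1 _ _] := bnd hk (ltn_ord j).
  by apply: (hinc x hx _ _ _ _ a1 c1); exact: (injW1 (ltn_ord i) (ltn_ord j) hij).
have cBv : (#|Bv| <= 1)%N.
  apply: card_le1_inj => i j hij; have [_ a1 _] := bnd hk (ltn_ord i);
  have [_ c1 _] := bnd hk (ltn_ord j).
  by apply: (hinc y hy _ _ _ _ a1 c1); exact: (injV2 hk (ltn_ord i) (ltn_ord j) hij).
have cBw : (#|Bw| <= 1)%N.
  apply: card_le1_inj => i j hij; have [_ _ a1] := bnd hk (ltn_ord i);
  have [_ _ c1] := bnd hk (ltn_ord j).
  by apply: (hinc y hy _ _ _ _ a1 c1); exact: (injW2 hk (ltn_ord i) (ltn_ord j) hij).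
have cB : (#|Bv| + #|Bw| <= 1)%N.
  case: (posnP #|Bv|) => [->|/card_gt0P [i hi]]; first by [].
  have -> : #|Bw| = 0%N.
    apply/eqP; rewrite cards_eq0; apply/eqP/setP => j; rewrite !inE.
    apply/negbTE; rewrite !inE in hi.
    have [_ a1 _] := bnd hk (ltn_ord i); have [_ _ c1] := bnd hk (ltn_ord j).
    by apply: (hinc y hy _ _ _ _ a1 c1 _ hi); exact: (injVW2 hk (ltn_ord i) (ltn_ord j)).
  by rewrite addn0.
have u1 := leq_card_setU Av Bv; have u2 := leq_card_setU Aw Bw.
move: u1 u2 => [u1 _] [u2 _].
lia.
Qed.
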